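(* Let $T=(V,E)$ be a tree with $\mathrm{pthin}(T)=2$, and let $\sigma$ be an ordering of $V$ and $S=\{V^0,V^1\}$ a partition of $V$ into two classes that are strongly consistent. Let $v\in V^0$ and let $w_1,w_2,w_3\in N(v)\cap V^1$ with $w_1<w_2<w_3$. Then $w_2$ has degree $1$ in $T$.
   Context: For a graph $G=(V,E)$, a linear ordering $<$ of $V$ and a partition of $V$ into classes are called strongly consistent if for every triple $r<s<t$ of vertices with $rt\in E$: if $r$ and $s$ belong to the same class then $st\in E$, and if $s$ and $t$ belong to the same class then $rs\in E$. The proper thinness $\mathrm{pthin}(G)$ is the minimum $k$ such that some ordering and some partition into $k$ classes are strongly consistent. $N(v)$ is the set of neighbors of $v$. *)

(* Defs.v *)
From mathcomp Require Import all_boot.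
Set Implicit Arguments. Unset Strict Implicit. Unset Printing Implicit Defensive.

Definition simple_graph (T : finType) (e : rel T) : Prop :=
  symmetric e /\ irreflexive e.

Definition connected_graph (T : finType) (e : rel T) : Prop :=
  forall x y : T, connect e x y.

Definition has_cycle (T : finType) (e : rel T) : Prop :=
  exists (x : T) (p : seq T),
    [/\ 2 <= size p, uniq (x :: p), path e x p & e (last x p) x].

Definition is_tree (T : finType) (e : rel T) : Prop :=
  simple_graph e /\ connected_graph e /\ ~ has_cycle e.

(* A linear ordering of V is given by an injective rank rk : T -> nat,
   with r < s iff rk r < rk s.  A partition into classes is given by a
   class map cls : T -> K (the classes are the nonempty fibres). *)
Definition strongly_consistent (T : finType) (e : rel T) (rk : T -> nat)
  (K : eqType) (cls : T -> K) : Prop :=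
  forall r s t : T, rk r < rk s -> rk s < rk t -> e r t ->
    (cls r = cls s -> e s t) /\ (cls s = cls t -> e r s).

Definition pthin_le (T : finType) (e : rel T) (k : nat) : Prop :=
  exists (rk : T -> nat) (cls : T -> 'I_k),
    injective rk /\ strongly_consistent e rk cls.

Definition pthin_eq (T : finType) (e : rel T) (k : nat) : Prop :=
  pthin_le e k /\ forall k', k' < k -> ~ pthin_le e k'.

Definition nbhd (T : finType) (e : rel T) (v : T) : {set T} := [set w | e v w].
Definition degree (T : finType) (e : rel T) (v : T) : nat := #|nbhd e v|.

(* Main.v *)
Require Import Defs.
From mathcomp Require Import all_boot.
From mathcomp Require Import zify.

Lemma between_lem (T : finType) (e : rel T) (rk : T -> nat) (cls : T -> bool) a b x :
  symmetric e -> strongly_consistent e rk cls -> (cls a != cls b) || (cls x == cls a) -> e a b ->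
  ~~ e a x -> ~~ e x b ->
  ~ ((rk a < rk x < rk b) \/ (rk b < rk x < rk a)).
Proof.
move=> sy sc hc eab nax nxb [/andP[h1 h2]|/andP[h1 h2]].
- have [c1 c2] := sc _ _ _ h1 h2 eab.
  have [h|h] : cls a = cls x \/ cls x = cls b.
    by move: hc; case: (cls a); case: (cls x); case: (cls b); first [by left | by right | by []].
  + by move: (c1 h); rewrite (negbTE nxb).
  + by move: (c2 h); rewrite (negbTE nax).
- rewrite sy in eab.
  have [c1 c2] := sc _ _ _ h1 h2 eab.
  rewrite sy in nax; rewrite sy in nxb.
  have [h|h] : cls b = cls x \/ cls x = cls a.
    by move: hc; case: (cls a); case: (cls x); case: (cls b); first [by left | by right | by []].
  + by move: (c1 h); rewrite (negbTE nax).
  + by move: (c2 h); rewrite (negbTE nxb).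
Qed.

Lemma arith (u w1 v w2 w3 : nat) :
  u != w1 -> u != w3 -> u != v -> w1 < w2 -> w2 < w3 ->
  ~ ((w2 < w1 < u) \/ (u < w1 < w2)) ->
  ~ ((w2 < w3 < u) \/ (u < w3 < w2)) ->
  ~ ((v < u < w1) \/ (w1 < u < v)) ->
  ~ ((v < u < w3) \/ (w3 < u < v)) -> False.
Proof. lia. Qed.

Theorem propositionA2 (T : finType) (e : rel T) (rk : T -> nat) (cls : T -> bool)
  (v w1 w2 w3 : T) :
  is_tree e -> pthin_eq e 2 ->
  injective rk -> (exists x, cls x) -> (exists x, ~~ cls x) ->
  strongly_consistent e rk cls ->
  cls v = false ->
  w1 \in nbhd e v -> w2 \in nbhd e v -> w3 \in nbhd e v ->
  cls w1 = true -> cls w2 = true -> cls w3 = true ->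
  rk w1 < rk w2 -> rk w2 < rk w3 ->
  degree e w2 = 1.
Proof.
move=> [[sy irr] [_ nocyc]] _ inj _ _ sc cv.
rewrite !inE => e1 e2 e3 c1 c2 c3 r12 r23.
have ne12 : w1 != w2 by apply/eqP => h; rewrite h ltnn in r12.
have ne23 : w2 != w3 by apply/eqP => h; rewrite h ltnn in r23.
have nev : forall w, e v w -> v != w by move=> w h; apply/eqP => h'; rewrite h' irr in h.
have tri : forall a b, e v a -> e v b -> a != b -> ~~ e a b.
  move=> a b ea eb nab; apply/negP => eab; apply: nocyc.
  exists v, [:: a; b]; split => //=.
  - by rewrite !inE negb_or nev // nev // nab.
  - by rewrite ea eab.
  - by rewrite sy.
have n12 := tri _ _ e1 e2 ne12.
have n23 := tri _ _ e2 e3 ne23.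
have key : forall u, e w2 u -> u = v.
  move=> u eu; apply/eqP; apply/negPn/negP => nuv.
  have nvu : ~~ e v u.
    apply/negP => evu; apply: nocyc; exists v, [:: w2; u]; split => //=.
    - rewrite !inE negb_or nev // (eq_sym v u) nuv /=.
      have : w2 != u by apply/eqP => h; rewrite h irr in eu.
      by move=> ->.
    - by rewrite e2 eu.
    - by rewrite sy.
  have sq : forall w, e v w -> w != w2 -> ~~ e u w.
    move=> w ew nw; apply/negP => euw.
    have nwu : w != u by apply/eqP => h; move: (tri _ _ ew e2 nw); rewrite h sy eu.
    apply: nocyc; exists v, [:: w; u; w2]; split => //=.
    - rewrite !inE !negb_or (nev _ ew) (nev _ e2) (eq_sym v u) nuv nwu nw /=.
      by rewrite andbT; apply/eqP => h; rewrite h irr in eu.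
    - by rewrite ew sy euw sy eu.
    - by rewrite sy.
  have nu1 := sq _ e1 ne12.
  have nu3 : ~~ e u w3 by apply: sq => //; rewrite eq_sym.
  have neu1 : rk u != rk w1.
    by apply/eqP => /inj h; move: n12; rewrite -h sy eu.
  have neu3 : rk u != rk w3.
    by apply/eqP => /inj h; move: n23; rewrite -h eu.
  have neuv : rk u != rk v by apply/eqP => /inj h; rewrite h eqxx in nuv.
  have hA : (cls w2 != cls u) || (cls w1 == cls w2) by rewrite c1 c2 orbT.
  have hA' : (cls w2 != cls u) || (cls w3 == cls w2) by rewrite c3 c2 orbT.
  have hC : (cls v != cls w1) || (cls u == cls v) by rewrite c1 cv.
  have hC' : (cls v != cls w3) || (cls u == cls v) by rewrite c3 cv.
  have A := @between_lem _ e rk cls w2 u w1 sy sc hA eu ltac:(by rewrite sy) ltac:(by rewrite sy).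
  have B := @between_lem _ e rk cls w2 u w3 sy sc hA' eu n23 ltac:(by rewrite sy).
  have C := @between_lem _ e rk cls v w1 u sy sc hC e1 nvu nu1.
  have D := @between_lem _ e rk cls v w3 u sy sc hC' e3 nvu nu3.
  exact: (@arith _ _ _ _ _ neu1 neu3 neuv r12 r23 A B C D).
apply/eqP; rewrite /degree (_ : nbhd e w2 = [set v]) ?cards1 //.
apply/setP => x; rewrite !inE; apply/idP/eqP => [/key //|->]; by rewrite sy.
Qed.
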